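(* Let $B=\bigoplus_{i\in\mathbb{Z}}\mathbb{Z}_2$ and $L_2=B\rtimes\langle t\rangle$ the lamplighter group, equipped with the word metric for the generating set $\{t,at\}$ (whose Cayley graph is the Diestel–Leader graph $DL(2,2)$). Let $\Psi:L_2\to L_2$ be a $(1,0)$-quasi-isometry (i.e. an isometry) that coarsely permutes the left cosets of $\langle t\rangle$, with induced permutation $\psi:B\to B$. Then $\psi$ is parallelogram preserving: for all $a,b,c,d\in B$ with $a+c=b+d$ we have $\psi(a)+\psi(c)=\psi(b)+\psi(d)$.
   Context: Elements of $L_2$ are $((x_i),k)$ with $((x_i),k)((y_i),\ell)=((x_i+y_{i-k}),k+\ell)$, $t=(0,1)$, $at=(e_0,1)$ where $e_0$ has a single $1$ at index $0$. $\Psi$ coarsely permutes the left cosets of $\langle t\rangle$ if there are a permutation $\sigma$ of these cosets and $C'\ge0$ with Hausdorff distance $d_{\mathcal H}(\Psi(g\langle t\rangle),\sigma(g\langle t\rangle))<C'$ for all $g$; identifying the coset $((x_i),k)\langle t\rangle$ with $(x_i)\in B$ gives $\psi$. *)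

(* Defs.v *)
From HB Require Import structures.
From mathcomp Require Import all_boot all_order all_algebra.
From mathcomp Require Import finmap.
Set Implicit Arguments. Unset Strict Implicit. Unset Printing Implicit Defensive.
Import GRing.Theory.
Local Open Scope fset_scope.

(* B = (+)_{i in Z} Z_2, represented by the (finite) set of indices where the
   entry is 1.  Addition in B is symmetric difference. *)
Definition B := {fset int}.
Definition Badd (x y : B) : B := (x `\` y) `|` (y `\` x).
Definition Bshift (k : int) (y : B) : B := [fset (i + k)%R | i in y].

Definition L2 := (B * int)%type.
Definition L2mul (g h : L2) : L2 := (Badd g.1 (Bshift g.2 h.1), (g.2 + h.2)%R).
Definition gen_t : L2 := (fset0, 1%R).
Definition gen_at : L2 := ([fset 0%R], 1%R).

Definition adj (g h : L2) : Prop :=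
  exists s, (s = gen_t \/ s = gen_at) /\ (h = L2mul g s \/ g = L2mul h s).

Inductive reach : L2 -> L2 -> nat -> Prop :=
| reach0 g : reach g g 0
| reachS g h k n : reach g h n -> adj h k -> reach g k n.+1.

Definition dist_is (g h : L2) (n : nat) : Prop :=
  reach g h n /\ forall m, reach g h m -> (n <= m)%N.

Definition dist_le (g h : L2) (r : nat) : Prop :=
  exists n, reach g h n /\ (n <= r)%N.

Definition hausdorff_le (X Y : L2 -> Prop) (r : nat) : Prop :=
  (forall x, X x -> exists y, Y y /\ dist_le x y r) /\
  (forall y, Y y -> exists x, X x /\ dist_le y x r).

(* left coset ((x_i),k)<t> = {((x_i),j) | j in Z}, identified with x *)
Definition coset (x : B) : L2 -> Prop := fun g => g.1 = x.

Definition image (f : L2 -> L2) (X : L2 -> Prop) : L2 -> Prop :=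
  fun y => exists x, X x /\ f x = y.

(* (1,0)-quasi-isometry: isometric embedding with 0-dense image *)
Definition isometry10 (Psi : L2 -> L2) : Prop :=
  (forall g h n, dist_is g h n -> dist_is (Psi g) (Psi h) n) /\
  (forall h, exists g, Psi g = h).

Definition coarsely_permutes (Psi : L2 -> L2) (psi : B -> B) : Prop :=
  bijective psi /\
  exists C : nat, forall x : B, hausdorff_le (image Psi (coset x)) (coset (psi x)) C.

Definition parallelogram_preserving (psi : B -> B) : Prop :=
  forall a b c d : B, Badd a c = Badd b d -> Badd (psi a) (psi c) = Badd (psi b) (psi d).

(* Main.v *)
Require Import Defs.
From mathcomp Require Import all_boot all_order all_algebra.
From mathcomp Require Import finmap.
From mathcomp Require Import zify.
Set Implicit Arguments. Unset Strict Implicit. Unset Printing Implicit Defensive.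
Import GRing.Theory Num.Theory Order.TTheory.
Local Open Scope fset_scope.
Local Open Scope ring_scope.

Lemma inB (x y : B) m : (m \in Badd x y) = (m \in x) (+) (m \in y).
Proof. rewrite /Badd in_fsetU !in_fsetD; by case: (m \in x); case: (m \in y). Qed.
Lemma Bshift0 k : Bshift k fset0 = fset0.
Proof. apply/fsetP => m; rewrite in_fset0; apply/negbTE; apply/imfsetP => [[i]]; by rewrite in_fset0. Qed.
Lemma Bshift1 k : Bshift k [fset 0] = [fset k].
Proof. apply/fsetP => m; rewrite in_fset1; apply/imfsetP/eqP => [[i]|->].
 by rewrite in_fset1 => /eqP -> ->; rewrite add0r. by exists 0; rewrite ?in_fset1 ?add0r. Qed.

Ltac bsolve := apply/fsetP => ?; rewrite ?inB ?in_fset0 ?in_fset1;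
  repeat match goal with |- context [?a \in ?b] => case: (a \in b) | |- context [?a == ?b] => case: (a == b) end; try done.

Lemma Badd0 (x : B) : Badd x fset0 = x. Proof. bsolve. Qed.
Lemma BaddC (x y : B) : Badd x y = Badd y x. Proof. bsolve. Qed.
Lemma BaddA (x y z : B) : Badd x (Badd y z) = Badd (Badd x y) z. Proof. bsolve. Qed.
Lemma BaddK (x y : B) : Badd x (Badd x y) = y. Proof. bsolve. Qed.
Lemma Baddxx (x : B) : Badd x x = fset0. Proof. bsolve. Qed.
Lemma Badd_inj (x y z : B) : Badd x y = Badd x z -> y = z.
Proof. by move=> H; rewrite -(BaddK x y) H BaddK. Qed.
Lemma Badd1_inj (z : B) a b : Badd z [fset a] = Badd z [fset b] -> a = b.
Proof. move/Badd_inj/fsetP/(_ a); rewrite !in_fset1 eqxx; by move/esym/eqP. Qed.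
Lemma Badd1_neq (z : B) a : Badd z [fset a] <> z.
Proof. move/fsetP/(_ a); rewrite inB in_fset1 eqxx; by case: (a \in z). Qed.

Definition adjc (g h : L2) : Prop :=
  (h.2 = g.2 + 1 /\ (h.1 = g.1 \/ h.1 = Badd g.1 [fset g.2])) \/
  (g.2 = h.2 + 1 /\ (g.1 = h.1 \/ g.1 = Badd h.1 [fset h.2])).

Lemma adjE g h : adj g h <-> adjc g h.
Proof.
split.
- move=> [s [[->|->] [->|->]]]; rewrite /adjc /L2mul /= ?Bshift0 ?Bshift1 ?Badd0; tauto.
- case: g => x k; case: h => y l; rewrite /adjc /=.
  move=> [[-> [->|->]]|[-> [->|->]]].
  + exists gen_t; split; first by left. left; by rewrite /L2mul /= Bshift0 Badd0.
  + exists gen_at; split; first by right. left; by rewrite /L2mul /= Bshift1.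
  + exists gen_t; split; first by left. right; by rewrite /L2mul /= Bshift0 Badd0.
  + exists gen_at; split; first by right. right; by rewrite /L2mul /= Bshift1.
Qed.

Lemma adj_sym g h : adj g h -> adj h g.
Proof. move=> [s [Hs [H|H]]]; exists s; tauto. Qed.

Lemma reach_cat g h k n m : reach g h n -> reach h k m -> reach g k (n + m).
Proof. move=> H1 H2; elim: H2 H1 => [h'|h' k' l m' _ IH Ha] H1; first by rewrite addn0.
rewrite addnS; exact: reachS (IH H1) Ha. Qed.

Lemma reach1 g h : adj g h -> reach g h 1.
Proof. move=> H; exact: reachS (reach0 g) H. Qed.

Lemma reach_sym g h n : reach g h n -> reach h g n.
Proof. elim=> [g'|g' h' k m _ IH Ha]; first exact: reach0.
rewrite -add1n; apply: reach_cat IH; apply: reach1; exact: adj_sym. Qed.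

Lemma reach0_eq g h : reach g h 0 -> g = h.
Proof. by inversion 1. Qed.

Lemma reach_height g h n : reach g h n -> g.2 - h.2 <= n%:Z /\ h.2 - g.2 <= n%:Z.
Proof. elim=> [g'|g' h' k m _ IH /adjE Ha]; first by rewrite subrr.
case: Ha => [[E _]|[E _]]; lia. Qed.

Lemma reach_bit g h n m : reach g h n -> m \in Badd g.1 h.1 -> g.2 - m <= n%:Z /\ m - g.2 <= n%:Z.
Proof. move=> H; elim: H m => [g' m|g' h' k l Hr IH /adjE Ha m]; first by rewrite Baddxx in_fset0.
have [H1 H2] := reach_height Hr.
case: Ha => [[E [F|F]]|[E [F|F]]].
- rewrite F => /IH; lia.
- rewrite F BaddA inB in_fset1; case: eqP => [->|_]; last by rewrite addbF => /IH; lia.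
  move=> _; lia.
- rewrite -F => /IH; lia.
- have F' : k.1 = Badd h'.1 [fset k.2]. { rewrite F; bsolve. }
  rewrite F' BaddA inB in_fset1; case: eqP => [->|_]; last by rewrite addbF => /IH; lia.
  move=> _; lia.
Qed.

Definition tr (v : B) (g : L2) : L2 := (Badd v g.1, g.2).
Lemma adj_tr v g h : adj g h -> adj (tr v g) (tr v h).
Proof. move=> /adjE H; apply/adjE; move: H; rewrite /adjc /tr /= => [[[E [F|F]]|[E [F|F]]]];
 rewrite ?F ?BaddA; tauto. Qed.

Lemma adj_dist1 g h : adj g h -> dist_is g h 1.
Proof. move=> H; split; first exact: reach1.
case=> // /reach0_eq E; move/adjE: H; rewrite E /adjc; lia. Qed.
Lemma dist1_adj g h : dist_is g h 1 -> adj g h.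
Proof. case=> H _; inversion H as [|g' h' k' n' H0 Ha]; subst. by move/reach0_eq: H0 => ->. Qed.

Lemma adj_up g h : adj g h -> h.2 = g.2 + 1 -> h.1 = g.1 \/ h.1 = Badd g.1 [fset g.2].
Proof. move/adjE=> [[_ H]|[E [F|F]]] E'; first done; first lia. lia. Qed.
Lemma adj_down g h : adj g h -> h.2 = g.2 - 1 -> h.1 = g.1 \/ h.1 = Badd g.1 [fset h.2].
Proof. move/adjE=> [[E _]|[_ [F|F]]] E'; first lia; first by left.
right; rewrite F; bsolve. Qed.
Lemma two_choice (z a b : B) f : (a = z \/ a = Badd z [fset f]) -> (b = z \/ b = Badd z [fset f]) ->
  a <> b -> a = Badd b [fset f].
Proof. move=> [->|->] [->|->] // _; bsolve. Qed.
Lemma adj_flip g h f : adj g h -> (h.2 = g.2 + 1 /\ f = g.2) \/ (h.2 = g.2 - 1 /\ f = h.2) ->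
  adj (tr [fset f] g) h.
Proof.
move/adjE=> Ha Hf; apply/adjE; move: Ha; rewrite /adjc /tr /=.
move=> [[E [F|F]]|[E [F|F]]]; (case: Hf => [[E' ->]|[E' ->]]; [try lia|try lia]).
- left; split=> //; right; rewrite F; bsolve.
- left; split=> //; left; rewrite F; bsolve.
- right; split=> //; right; rewrite F; bsolve.
- right; split=> //; left; rewrite F; bsolve.
Qed.
Lemma Badd_eq0 (x y : B) : Badd x y = fset0 -> x = y.
Proof. move=> E; apply/fsetP => m; move/fsetP/(_ m): E; rewrite inB in_fset0.
by case: (m \in x); case: (m \in y). Qed.


Definition spath (p : int -> L2) := forall i : int, adj (p i) (p (i+1)).
Definition sLB (p : int -> L2) := forall (j : int) (n m : nat), reach (p j) (p (j + n%:Z)) m -> (n <= m)%N.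
Definition snear (p : int -> L2) (y : B) (C : nat) :=
  forall j : int, exists q : L2, q.1 = y /\ exists n, reach (p j) q n /\ (n <= C)%N.
Definition srev (p : int -> L2) := fun j : int => p (- j).

Lemma spath_reach p (j : int) (n : nat) : spath p -> reach (p j) (p (j + n%:Z)) n.
Proof. move=> Hp; elim: n => [|n IH]; first by rewrite addr0; exact: reach0.
have -> : j + n.+1%:Z = (j + n%:Z) + 1 by lia.
exact: reachS IH (Hp _). Qed.

Lemma spath_rev p : spath p -> spath (srev p).
Proof. move=> Hp i; rewrite /srev; apply: adj_sym.
have E : - i = - (i + 1) + 1 by lia. rewrite [X in adj _ (p X)]E; exact: Hp. Qed.

Lemma sLB_rev p : sLB p -> sLB (srev p).
Proof. move=> H j n m; rewrite /srev => /reach_sym.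
have E : - j = - (j + n%:Z) + n%:Z by lia. rewrite [X in reach _ (p X)]E; exact: H. Qed.

Lemma snear_rev p y C : snear p y C -> snear (srev p) y C.
Proof. move=> H j; exact: H. Qed.

Lemma step_h p (i : int) : spath p -> (p (i+1)).2 = (p i).2 + 1 \/ (p (i+1)).2 = (p i).2 - 1.
Proof. move=> Hp; move/adjE: (Hp i); rewrite /adjc; case=> [[E _]|[E _]]; lia. Qed.

Lemma int_nat (z : int) : exists n : nat, z = n%:Z \/ z = - n%:Z.
Proof. case: z => n; [exists n; by left | exists n.+1; right; by rewrite NegzE]. Qed.

Lemma vert y (a b : int) : exists k : nat, reach (y, a) (y, b) k /\ (k%:Z = b - a \/ k%:Z = a - b).
Proof.
have Hp : spath (fun j => (y, j)) by move=> i; apply/adjE; rewrite /adjc /=; tauto.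
have [n [E|E]] := int_nat (b - a).
- exists n; split; last by lia.
  have -> : b = a + n%:Z by lia. exact: (spath_reach a n Hp).
- exists n; split; last by lia.
  apply: reach_sym. have -> : a = b + n%:Z by lia. exact: (spath_reach b n Hp).
Qed.

Lemma near2 p y C (j : int) : snear p y C -> exists k, (k <= 2 * C)%N /\ reach (p j) (y, (p j).2) k.
Proof.
move=> /(_ j) [[y' a] /= [-> [n [Hr Hn]]]].
have [H1 H2] := reach_height Hr.
have [k [Hk E]] := vert y a (p j).2.
exists (n + k)%N; split; first by move: H1 H2 E; rewrite /=; lia.
exact: reach_cat Hr Hk.
Qed.

Lemma nearlin p y C (j : int) (n : nat) : spath p -> sLB p -> snear p y C ->
  n%:Z <= 4 * C%:Z + (p (j + n%:Z)).2 - (p j).2 \/ n%:Z <= 4 * C%:Z + (p j).2 - (p (j + n%:Z)).2.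
Proof.
move=> Hp Hl Hn.
have [k1 [Hk1 R1]] := near2 j Hn.
have [k3 [Hk3 R3]] := near2 (j + n%:Z) Hn.
have [k2 [R2 E2]] := vert y (p j).2 (p (j + n%:Z)).2.
have R := reach_cat (reach_cat R1 R2) (reach_sym R3).
have := Hl _ _ _ R. lia.
Qed.

Lemma hbound p (j : int) (n : nat) : spath p -> (p (j + n%:Z)).2 - (p j).2 <= n%:Z /\ (p j).2 - (p (j + n%:Z)).2 <= n%:Z.
Proof. move=> Hp; have [H1 H2] := reach_height (spath_reach j n Hp); lia. Qed.

Lemma ivt (f : nat -> int) (c : int) (N : nat) : (forall i, f i.+1 = f i + 1 \/ f i.+1 = f i - 1) ->
  c <= f 0%N -> f N < c -> exists i, (i < N)%N /\ f i = c /\ f i.+1 = c - 1.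
Proof.
move=> Hs H0; elim: N => [|N IH]; first lia.
move=> HN. case: (ltP (f N) c) => [/IH [i [Hi E]]|HN']; first by exists i; split=> //; lia.
exists N; split=> //. have := Hs N; lia.
Qed.

Lemma p_ext (p : int -> L2) (a b : int) : a = b -> p a = p b. Proof. by move=> ->. Qed.

Lemma right_turn_false p (j : int) (i : nat) : spath p -> sLB p ->
  (p (j - 1)).2 = (p (j + 1)).2 ->
  (p (j + 1 + i%:Z)).2 = (p (j + 1)).2 -> (p (j + 1 + i%:Z + 1)).2 = (p j).2 -> False.
Proof.
move=> Hp Hl Eh Hk1 Hk.
have A1 := Hp (j - 1). have A2 := Hp j.
rewrite (p_ext p (_ : j - 1 + 1 = j)) in A1; last lia.
have Hne : p (j - 1) <> p (j + 1).
  move=> E. have : reach (p (j - 1)) (p (j - 1 + 2%:Z)) 0.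
    rewrite (p_ext p (_ : j - 1 + 2%:Z = j + 1)); last lia. rewrite E; exact: reach0.
  by move/Hl.
have Hne' : (p (j - 1)).1 <> (p (j + 1)).1.
  move=> E; apply: Hne; exact: injective_projections.
have [f [Ef Hf]] : exists f, (p (j - 1)).1 = Badd (p (j + 1)).1 [fset f] /\
   (((p (j + 1)).2 = (p j).2 + 1 /\ f = (p j).2) \/ ((p (j + 1)).2 = (p j).2 - 1 /\ f = (p (j+1)).2)).
  have [Hs|Hs] := step_h j Hp.
  - exists (p j).2; split; last by left.
    apply: two_choice Hne'; [apply: adj_up (adj_sym A1) _; lia | exact: adj_up A2 Hs].
  - exists (p (j + 1)).2; split; last by right.
    apply: two_choice Hne'; [ | exact: adj_down A2 Hs].
    rewrite -Eh; apply: adj_down (adj_sym A1) _; lia.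
pose v : B := [fset f].
pose q := fun k => tr v (p k).
have Hq : spath q by move=> k; apply: adj_tr.
have R := spath_reach (j + 1) i Hq.
have Hlast : adj (q (j + 1 + i%:Z)) (p (j + 1 + i%:Z + 1)).
  apply: adj_flip (Hp _) _. case: Hf => [[H1 H2]|[H1 H2]]; [right|left]; split; lia.
have R2 := reachS R Hlast.
have Eq : q (j + 1) = p (j - 1).
  rewrite /q /tr; apply: injective_projections => /=; [rewrite Ef; bsolve | by rewrite Eh].
rewrite Eq in R2.
rewrite (p_ext p (_ : j + 1 + i%:Z + 1 = j - 1 + (i.+3)%:Z)) in R2; last lia.
move/Hl: R2; lia.
Qed.

Lemma side_false p (j : int) (N : nat) : spath p -> sLB p ->
  (p (j - 1)).2 = (p (j + 1)).2 ->
  ((p (j + 1)).2 = (p j).2 + 1 /\ (p (j + 1 + N%:Z)).2 <= (p j).2 - 1) \/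
  ((p (j + 1)).2 = (p j).2 - 1 /\ (p j).2 + 1 <= (p (j + 1 + N%:Z)).2) -> False.
Proof.
move=> Hp Hl Eh.
have Hst : forall i : nat, (p (j + 1 + i.+1%:Z)).2 = (p (j + 1 + i%:Z)).2 + 1 \/
                           (p (j + 1 + i.+1%:Z)).2 = (p (j + 1 + i%:Z)).2 - 1.
  move=> i; rewrite (p_ext p (_ : j + 1 + i.+1%:Z = j + 1 + i%:Z + 1)); last lia.
  exact: step_h.
have Hfin : forall i : nat, (p (j + 1 + i%:Z)).2 = (p (j + 1)).2 ->
   (p (j + 1 + i.+1%:Z)).2 = (p j).2 -> False.
  move=> i H1 H2; apply: (right_turn_false (i := i) Hp Hl Eh H1).
  by rewrite (p_ext p (_ : j + 1 + i%:Z + 1 = j + 1 + i.+1%:Z)); last lia.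
case=> [[Hv HN]|[Hv HN]].
- have [||i [_ [E1 E2]]] := ivt (f := fun i : nat => (p (j + 1 + i%:Z)).2) (c := (p j).2 + 1) (N := N) Hst.
  + by rewrite addr0 Hv.
  + lia.
  + apply: (Hfin i); lia.
- have [|||i [_ [E1 E2]]] := ivt (f := fun i : nat => - (p (j + 1 + i%:Z)).2) (c := - ((p j).2 - 1)) (N := N).
  + move=> i; have := Hst i; lia.
  + rewrite addr0 Hv; lia.
  + lia.
  + apply: (Hfin i); lia.
Qed.

Lemma noturn p y C (j : int) : spath p -> sLB p -> snear p y C ->
  (p (j + 1)).2 - (p j).2 = (p j).2 - (p (j - 1)).2.
Proof.
move=> Hp Hl Hn.
have Hs1 := step_h j Hp.
have Hs0 := step_h (j - 1) Hp.
rewrite (p_ext p (_ : j - 1 + 1 = j)) in Hs0; last lia.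
have [E|E] : (p (j + 1)).2 - (p j).2 = (p j).2 - (p (j - 1)).2 \/ (p (j - 1)).2 = (p (j + 1)).2 by lia.
  done.
exfalso.
pose N := (4 * C + 1)%N.
have L := nearlin (j - 1 - N%:Z) (N + N + 2) Hp Hl Hn.
rewrite (p_ext p (_ : j - 1 - N%:Z + (N + N + 2)%N%:Z = j + 1 + N%:Z)) in L; last lia.
have [B1 B2] := hbound (j - 1 - N%:Z) (N + 1) Hp.
rewrite (p_ext p (_ : j - 1 - N%:Z + (N + 1)%N%:Z = j)) in B1 B2; last lia.
have [B3 B4] := hbound j (N + 1) Hp.
rewrite (p_ext p (_ : j + (N + 1)%N%:Z = j + 1 + N%:Z)) in B3 B4; last lia.
have Hr := side_false (j := j) (N := N) Hp Hl E.
have Hl' := side_false (j := - j) (N := N) (spath_rev Hp) (sLB_rev Hl).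
rewrite /srev (p_ext p (_ : - (- j - 1) = j + 1)) ?(p_ext p (_ : - (- j + 1) = j - 1))
   ?(p_ext p (_ : - (- j + 1 + N%:Z) = j - 1 - N%:Z)) ?opprK in Hl'; try lia.
Qed.

Lemma const_int (d : int -> int) : (forall k : int, d (k + 1) = d k) -> forall k : int, d k = d 0.
Proof.
move=> H.
have Hp : forall n : nat, d n%:Z = d 0 /\ d (- n%:Z) = d 0.
  elim=> [|n [IH1 IH2]]; first done.
  split.
    rewrite -IH1 -(H n%:Z); congr d; lia.
  rewrite -IH2 -(H (- n.+1%:Z)); congr d; lia.
case=> n; first by case: (Hp n).
rewrite NegzE; by case: (Hp n.+1).
Qed.

Lemma coset_inc p y C : spath p -> snear p y C -> (forall i, (p (i + 1)).2 = (p i).2 + 1) ->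
  forall j, (p j).1 = y.
Proof.
move=> Hp Hn Hi j.
have hup : forall N : nat, (p (j + N%:Z)).2 = (p j).2 + N%:Z.
  elim=> [|N IH]; first by rewrite !addr0.
  rewrite (p_ext p (_ : j + N.+1%:Z = j + N%:Z + 1)); last lia. rewrite Hi IH; lia.
have hdown : forall N : nat, (p (j - N%:Z)).2 = (p j).2 - N%:Z.
  elim=> [|N IH]; first by rewrite !subr0.
  have := Hi (j - N.+1%:Z). rewrite (p_ext p (_ : j - N.+1%:Z + 1 = j - N%:Z)); last lia. lia.
have rup : forall (N : nat) m, m < (p j).2 -> (m \in (p (j + N%:Z)).1) = (m \in (p j).1).
  move=> N m Hm; elim: N => [|N IH]; first by rewrite addr0.
  have A := Hp (j + N%:Z).
  rewrite (p_ext p (_ : j + N.+1%:Z = j + N%:Z + 1)); last lia.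
  case: (adj_up A (Hi _)) => ->; rewrite ?inB ?in_fset1 IH //.
  rewrite hup; case: eqP => [E|_]; [lia | by rewrite addbF].
have rdown : forall (N : nat) m, (p j).2 <= m -> (m \in (p (j - N%:Z)).1) = (m \in (p j).1).
  move=> N m Hm; elim: N => [|N IH]; first by rewrite subr0.
  have A := Hp (j - N.+1%:Z).
  rewrite (p_ext p (_ : j - N.+1%:Z + 1 = j - N%:Z)) in A; last lia.
  have E := Hi (j - N.+1%:Z).
  rewrite (p_ext p (_ : j - N.+1%:Z + 1 = j - N%:Z)) in E; last lia.
  case: (adj_up A E) => F; rewrite -IH F // inB in_fset1.
  rewrite hdown; case: eqP => [E'|_]; [lia | by rewrite addbF].
case: (eqVneq (p j).1 y) => // Hne; exfalso.
have : Badd (p j).1 y != fset0 by apply/negP => /eqP /Badd_eq0 E; rewrite E eqxx in Hne.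
case/fset0Pn => m; rewrite inB => Hm.
case: (ltP m (p j).2) => Hm2.
- have [q [Eq [n0 [R Hn0]]]] := Hn (j + (C.+1)%:Z).
  have := reach_bit R (m := m). rewrite inB Eq rup // Hm hup => /(_ isT). lia.
- have [q [Eq [n0 [R Hn0]]]] := Hn (j - (C.+1)%:Z).
  have := reach_bit R (m := m). rewrite inB Eq rdown // Hm hdown => /(_ isT). lia.
Qed.

Lemma line_lemma p y C : spath p -> sLB p -> snear p y C ->
  (forall j, (p j).1 = y) /\
  ((forall i, (p (i + 1)).2 = (p i).2 + 1) \/ (forall i, (p (i + 1)).2 = (p i).2 - 1)).
Proof.
move=> Hp Hl Hn.
have Hc := const_int (d := fun k => (p (k + 1)).2 - (p k).2).
have Hd : forall k, (p (k + 1)).2 - (p k).2 = (p 1).2 - (p 0).2.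
  move=> k; rewrite (Hc _ k) ?add0r // => k'.
  rewrite (noturn (k' + 1) Hp Hl Hn) (p_ext p (_ : k' + 1 - 1 = k')) //; lia.
have Hmono : (forall i, (p (i + 1)).2 = (p i).2 + 1) \/ (forall i, (p (i + 1)).2 = (p i).2 - 1).
  have := step_h 0 Hp; rewrite add0r => -[E|E]; [left|right] => i; have := Hd i; lia.
split=> //.
case: Hmono => Hm.
- exact: coset_inc Hp Hn Hm.
- move=> j. have := coset_inc (spath_rev Hp) (snear_rev Hn) _ (- j).
  rewrite /srev opprK; apply=> i.
  have := Hm (- (i + 1)). rewrite (p_ext p (_ : - (i + 1) + 1 = - i)); last lia. lia.
Qed.


Lemma B_ind (P : B -> Prop) : P fset0 -> (forall u i, P u -> P (Badd u [fset i])) -> forall u, P u.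
Proof.
move=> H0 HS.
suff : forall (n : nat) (u : B), #|` u| = n -> P u by move=> H u; exact: (H _ u erefl).
elim=> [|n IH] u Hu; first by rewrite (cardfs0_eq Hu).
have : u != fset0 by apply/negP => /eqP E; rewrite E cardfs0 in Hu.
case/fset0Pn => i Hi.
have -> : u = Badd (u `\ i) [fset i].
  apply/fsetP => m; rewrite inB in_fsetD1 in_fset1.
  case: (eqVneq m i) => [->|_]; by rewrite ?Hi ?addbF.
apply: HS; apply: IH.
by move: Hu; rewrite (cardfsD1 i) Hi add1n => -[].
Qed.

Lemma adj_ne g h : adj g h -> g.1 <> h.1 -> exists m, h.1 = Badd g.1 [fset m] /\
  ((h.2 = g.2 + 1 /\ m = g.2) \/ (h.2 = g.2 - 1 /\ m = h.2)).
Proof.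
move=> /adjE [[E [F|F]]|[E [F|F]]] Hne; try by (exfalso; apply: Hne).
- exists g.2; split=> //; left; split=> //.
- exists h.2; split; last by right; split=> //; lia.
  rewrite F; bsolve.
Qed.

Lemma Badd_swap (a b c : B) : Badd a (Badd c b) = Badd c (Badd a b). Proof. bsolve. Qed.

Theorem proposition4p2 (Psi : L2 -> L2) (psi : B -> B) :
  isometry10 Psi -> coarsely_permutes Psi psi -> parallelogram_preserving psi.
Proof.
move=> [Hiso _] [Hbij [C HC]].
have psi_inj := bij_inj Hbij.
pose T x j := (Psi (x, j)).2.
have Hline : forall x, spath (fun j => Psi (x, j)) /\ sLB (fun j => Psi (x, j)) /\
                       snear (fun j => Psi (x, j)) (psi x) C.
  move=> x; split; [|split].
  - move=> i; apply: dist1_adj; apply: Hiso; apply: adj_dist1.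
    apply/adjE; rewrite /adjc /=; tauto.
  - move=> j n m R.
    have Hd : dist_is (x, j) (x, j + n%:Z) n.
      have Hv : spath (fun k => (x, k)).
        move=> i; apply/adjE; rewrite /adjc /=; tauto.
      split; first exact: (spath_reach j n Hv).
      move=> m' /reach_height /= [H1 H2]; lia.
    have [_ H] := Hiso _ _ _ Hd. exact: H R.
  - move=> j; have [H _] := HC x.
    have [|q [Hq [n [R Hn]]]] := H (Psi (x, j)); first by exists (x, j).
    by exists q; split=> //; exists n.
have Hl : forall x, (forall j, (Psi (x, j)).1 = psi x) /\
   ((forall i : int, T x (i + 1) = T x i + 1) \/ (forall i : int, T x (i + 1) = T x i - 1)).
  move=> x; have [A [B' C']] := Hline x; exact: line_lemma A B' C'.
have HP : forall (x : B) (j : int), Psi (x, j) = (psi x, T x j).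
  move=> x j; apply: injective_projections => //=; exact: (proj1 (Hl x)).
have edge : forall (x : B) (i : int), (forall k, T (Badd x [fset i]) k = T x k) /\
   exists m : int, psi (Badd x [fset i]) = Badd (psi x) [fset m] /\
   ((T x (i + 1) = T x i + 1 /\ m = T x i) \/ (T x (i + 1) = T x i - 1 /\ m = T x i - 1)).
  move=> x i; set x' := Badd x [fset i].
  have Hne : psi x <> psi x'.
    move/psi_inj => E; apply: (@Badd1_neq x i); by rewrite -/x' -E.
  have e1 : adj (Psi (x, i)) (Psi (x', i + 1)).
    apply: dist1_adj; apply: Hiso; apply: adj_dist1; apply/adjE; rewrite /adjc /=; tauto.
  have e2 : adj (Psi (x, i + 1)) (Psi (x', i)).
    apply: dist1_adj; apply: Hiso; apply: adj_dist1; apply/adjE; rewrite /adjc /=.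
    right; split=> //; right; rewrite /x'; bsolve.
  rewrite !HP in e1 e2.
  have [m1 [F1 G1]] := adj_ne e1 Hne.
  have [m2 [F2 G2]] := adj_ne e2 Hne.
  rewrite /= in F1 F2 G1 G2.
  have Em : m1 = m2 by apply: (@Badd1_inj (psi x)); rewrite -F1 -F2.
  have [_ Mx] := Hl x. have [_ Mx'] := Hl x'.
  have Hs : forall k : int, T x' (k + 1) - T x' k = T x (k + 1) - T x k.
    move=> k; case: Mx => Mx; case: Mx' => Mx';
    [ have := Mx k; have := Mx' k; lia
    | exfalso; have := Mx i; have := Mx' i; lia
    | exfalso; have := Mx i; have := Mx' i; lia
    | have := Mx k; have := Mx' k; lia ].
  have Hi : T x' i = T x i.
    case: Mx => Mx; case: Mx' => Mx'; have := Mx i; have := Mx' i; lia.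
  split.
  - have Hc := const_int (d := fun k => T x' k - T x k).
    have H0 : forall k : int, T x' k - T x k = T x' 0 - T x 0.
      move=> k; apply: Hc => k' /=; have := Hs k'; lia.
    move=> k; have := H0 k; have := H0 i; lia.
  - exists m1; split=> //.
    case: Mx => Mx; have := Mx i; have := Hs i; lia.
have TT : forall (x : B) (k : int), T x k = T fset0 k.
  apply: B_ind => // u i IH k; rewrite (proj1 (edge u i)); exact: IH.
pose c (i : int) := Badd (psi (Badd fset0 [fset i])) (psi fset0).
have K : forall (w : B) (i : int), psi (Badd w [fset i]) = Badd (c i) (psi w).
  move=> w i.
  have [_ [m [E1 G1]]] := edge w i.
  have [_ [m0 [E0 G0]]] := edge fset0 i.
  rewrite !TT in G1. 
  have Em : m = m0 by lia.
  rewrite /c E1 E0 Em; bsolve.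
have Q : forall u x, Badd (psi x) (psi (Badd x u)) = Badd (psi fset0) (psi u).
  apply: B_ind.
  - move=> x; by rewrite Badd0 !Baddxx.
  - move=> u i IH x; rewrite BaddA !K Badd_swap IH Badd_swap //.
move=> a b c' d E.
have Ha := Q (Badd a c') a. have Hb := Q (Badd b d) b.
rewrite BaddK in Ha. rewrite BaddK in Hb.
by rewrite Ha Hb E.
Qed.
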